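(* Let $\lambda\in\Lambda^{\bullet}(n,r)$ and $A\in\mathrm{cb}(\lambda)$. Then: (1) there exist indices $1\le i_1,\dots,i_l\le n-1$ with $e_{i_1}e_{i_2}\cdots e_{i_l}\cdot\overline{e_A}=\overline{k_\lambda}$ in $S_\lambda$; (2) for indices $1\le i_1,\dots,i_l\le n-1$, the identity $e_{i_1}e_{i_2}\cdots e_{i_l}\cdot\overline{e_A}=\overline{k_\lambda}$ holds if and only if $\overline{e_A}=f_{i_l}\cdots f_{i_2}f_{i_1}\cdot\overline{k_\lambda}$; (3) if $\overline{e_A}=f_{i_l}\cdots f_{i_1}\cdot\overline{k_\lambda}=f_{j_s}\cdots f_{j_1}\cdot\overline{k_\lambda}$, then the multisets $\{i_1,\dots,i_l\}$ and $\{j_1,\dots,j_s\}$ are equal; in particular $l=s$.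
   Context: Setting: $n,r\ge 0$; $\Lambda(n,r)$, $\Lambda^\bullet(n,r)$, $M_n(r)$, $\mathrm{ro}$, $\mathrm{co}$, $E_{a,b}$, $D_\lambda$ as usual. $\mathbf{S}_0(n,r)=S_0(n,r)\otimes_{\mathbb Z}\mathbb C$ is the complex $0$-Schur algebra (the $q=0$ specialization of the Dipper–James $q$-Schur algebra). It has the Jensen–Su standard basis $\{e_A:A\in M_n(r)\}$ with: - $e_Ae_B=0$ unless $\mathrm{co}(A)=\mathrm{ro}(B)$, in which case $e_Ae_B=e_C$ for a unique $C$. - $k_\lambda:=e_{D_\lambda}$ satisfies $k_\lambda e_A=\delta_{\lambda,\mathrm{ro}(A)}e_A$ and $e_Ak_\lambda=\delta_{\lambda,\mathrm{co}(A)}e_A$. - $e_i=\sum_\lambda e_{D_\lambda-E_{i+1,i+1}+E_{i,i+1}}$ and $f_i=\sum_\lambda e_{D_\lambda-E_{i,i}+E_{i+1,i}}$ for $1\le i\le n-1$ (sums over $\lambda$ giving nonnegative matrices). - If $\mathrm{ro}(A)=\lambda$: $e_ie_A=e_{A+E_{i,p}-E_{i+1,p}}$ when $\lambda_{i+1}>0$, where $p$ is the largest $j$ with $a_{i+1,j}>0$, and $e_ie_A=0$ otherwise. - $f_ie_A=e_{A-E_{i,q}+E_{i+1,q}}$ when $\lambda_i>0$, where $q$ is the smallest $j$ with $a_{i,j}>0$, and $f_ie_A=0$ otherwise. $P_\lambda$: for a strong composition $\alpha=(\alpha_1,\dots,\alpha_s)$ of $n$, cut $\lambda$ into consecutive pieces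 of lengths $\alpha_1,\dots,\alpha_s$. $\alpha\in\max(\lambda)$ if each piece is $(0)$ or has nonzero first and last entries. $A(\alpha;v)$ keeps the columns of $A$ with indices in the $v$-th block and zeroes the others. A matrix is open if $a_{i,j}a_{i',j'}=0$ for all $i<i'$, $j<j'$. $A$ is open on columns w.r.t. $\alpha$ if every $A(\alpha;v)$ is open. $B^{\lambda,\alpha}=\{e_A:\mathrm{co}(A)=\lambda, A\text{ open on columns w.r.t. }\alpha\}$, and $B^\lambda=\{e_A:\mathrm{co}(A)=\lambda\}\setminus\bigcup_{\alpha\in\max(\lambda)\setminus\{(1^n)\}}B^{\lambda,\alpha}$. $P_\lambda=\mathbb C B^\lambda$, with $b\cdot e_A=e_B$ if $be_A=e_B$ in $S_0(n,r)$ and $e_B\in B^\lambda$, and $0$ otherwise, for $b\in\{e_i,f_i,k_\mu\}$. Column block diagonal matrix: $a_{i,j}>0\Rightarrow a_{i',s}=0$ for all $i'\le i$, $s>j$. $\mathrm{cb}(\lambda)$ is the set of such $n\times n$ matrices with $\mathrm{co}(A)=\lambda$, and $\beta^\lambda=\{e_A:A\in\mathrm{cb}(\lambda)\}\subseteq B^\lambda$. The span $N_\lambda$ of $B^\lambda\setminus\beta^\lambda$ is a submodule of $P_\lambda$. Set $S_\lambda=P_\lambda/N_\lambda$, with basis $\overline{e_A}=e_A+N_\lambda$ for $A\in\mathrm{cb}(\lambda)$; note $k_\lambda\in\beta^\lambda$. *)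

(* Defs.v *)
From mathcomp Require Import all_boot all_algebra.
Set Implicit Arguments. Unset Strict Implicit. Unset Printing Implicit Defensive.

Section ZeroSchur.
Variable n : nat.

(* An n x n matrix with nonnegative integer entries; rows/columns are
   0-based ordinals: paper's row k (1-based) is ordinal k-1. *)
Notation mat := 'M[nat]_n.

Definition ncomp := {ffun 'I_n -> nat}.

Definition in_Lambda (r : nat) (lam : ncomp) : Prop := \sum_(i < n) lam i = r.

Definition in_Lambda_bullet (r : nat) (lam : ncomp) : Prop :=
  in_Lambda r lam /\ forall i j : 'I_n, i <= j -> lam i = 0 -> lam j = 0.

Definition ro (A : mat) : ncomp := [ffun i => \sum_(j < n) A i j].
Definition co (A : mat) : ncomp := [ffun j => \sum_(i < n) A i j].

Definition Dmat (lam : ncomp) : mat := (\matrix_(i, j) (if i == j then lam i else 0)%N)%R.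

Definition col_block_diag (A : mat) : bool :=
  [forall i : 'I_n, forall j : 'I_n, (0 < A i j) ==>
     [forall i' : 'I_n, forall s : 'I_n, ((i' <= i) && (j < s)) ==> (A i' s == 0)]].

Definition in_cb (lam : ncomp) (A : mat) : bool := col_block_diag A && (co A == lam).

(* entry of A in the row with 0-based nat index k (0 if k >= n) *)
Definition rowent (A : mat) (k : nat) (j : 'I_n) : nat :=
  \sum_(a < n | (a : nat) == k) A a j.
Definition rowsum (A : mat) (k : nat) : nat := \sum_(j < n) rowent A k j.

(* e_i e_A in S_0(n,r), for 1 <= i <= n-1 (paper's indexing);
   None stands for 0.  Paper rows i, i+1 are 0-based rows i-1, i. *)
Definition e_step (i : nat) (A : mat) : option mat :=
  if 0 < rowsum A i then
    let p := \max_(j < n | 0 < rowent A i j) (j : nat) in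
    Some (\matrix_(a, b)
            (if (b : nat) == p then
               (if (a : nat) == i.-1 then A a b + 1
                else if (a : nat) == i then A a b - 1 else A a b)
             else A a b)%N)%R
  else None.

Definition f_step (i : nat) (A : mat) : option mat :=
  if 0 < rowsum A i.-1 then
    let q := \big[minn/n]_(j < n | 0 < rowent A i.-1 j) (j : nat) in
    Some (\matrix_(a, b)
            (if (b : nat) == q then
               (if (a : nat) == i.-1 then A a b - 1
                else if (a : nat) == i then A a b + 1 else A a b)
             else A a b)%N)%R
  else None.

(* Elements of S_lambda of the form 0 or a basis vector \bar{e_A}
   (A in cb(lambda)): None = 0, Some A = \bar{e_A}.  This set is stable
   under e_i, f_i.  b . \bar{e_A} = \bar{e_B} if b e_A = e_B in S_0(n,r)
   and B in cb(lambda) (recall beta^lambda is contained in B^lambda, and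
   B^lambda \ beta^lambda spans N_lambda), and 0 otherwise. *)
Definition Svec := option mat.

Definition S_act (lam : ncomp) (step : mat -> option mat) (x : Svec) : Svec :=
  match x with
  | None => None
  | Some A => match step A with
              | Some B => if in_cb lam B then Some B else None
              | None => None
              end
  end.

Definition act_e (lam : ncomp) (i : nat) : Svec -> Svec := S_act lam (e_step i).
Definition act_f (lam : ncomp) (i : nat) : Svec -> Svec := S_act lam (f_step i).

Definition ebar (A : mat) : Svec := Some A.
Definition kbar (lam : ncomp) : Svec := Some (Dmat lam).

(* e_{i_1} e_{i_2} ... e_{i_l} . x   for s = [:: i_1; ...; i_l] *)
Definition act_es (lam : ncomp) (s : seq nat) (x : Svec) : Svec :=
  foldr (act_e lam) x s.

(* f_{i_l} ... f_{i_2} f_{i_1} . x   for s = [:: i_1; ...; i_l] *)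
Definition act_fs_rev (lam : ncomp) (s : seq nat) (x : Svec) : Svec :=
  foldl (fun y i => act_f lam i y) x s.

Definition good_indices (s : seq nat) : bool := all (fun i => (0 < i) && (i < n)) s.

End ZeroSchur.

(* Main.v *)
Require Import Defs.
From mathcomp Require Import all_boot all_algebra.
From mathcomp Require Import zify.
Set Implicit Arguments. Unset Strict Implicit. Unset Printing Implicit Defensive.

Section Proofs.
Variable n : nat.
Local Notation mat := 'M[nat]_n.

Definition cbd (A : mat) := forall (i j : 'I_n), 0 < A i j ->
  forall (i' s : 'I_n), i' <= i -> j < s -> A i' s = 0.

Lemma cbdP A : reflect (cbd A) (col_block_diag A).
Proof.
apply: (iffP forallP) => [H i j Hij i' s Hi Hs | H i].
  have := H i => /forallP /(_ j) /implyP /(_ Hij) /forallP /(_ i') /forallP /(_ s) /implyP.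
  by rewrite Hi Hs => /(_ isT) /eqP.
apply/forallP => j; apply/implyP => Hij; apply/forallP => i'; apply/forallP => s.
by apply/implyP => /andP [H1 H2]; apply/eqP; apply: H Hij _ _ H1 H2.
Qed.

Lemma cb_row_uniq A (a p : 'I_n) : cbd A -> 0 < A a p -> forall b, (0 < A a b) = (b == p).
Proof.
move=> H Hp b; case: (ltngtP b p) => Hb.
- have Hn : (b == p) = false by apply/eqP => E; rewrite E ltnn in Hb.
  rewrite Hn; case E: (0 < A a b) => //.
  by move: Hp; rewrite (H a b E a p (leqnn a) Hb).
- have Hn : (b == p) = false by apply/eqP => E; rewrite E ltnn in Hb.
  by rewrite Hn (H a p Hp a b (leqnn a) Hb).
- have -> : b = p by apply: val_inj; exact: Hb.
  by rewrite eqxx Hp.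
Qed.

Lemma sum_pos_ex (F : 'I_n -> nat) : 0 < \sum_i F i -> exists i, 0 < F i.
Proof.
move=> H; case: (pickP (fun i => 0 < F i)) => [i Hi|H0]; first by exists i.
rewrite big1 in H => // i _; apply/eqP; rewrite -leqn0 leqNgt H0 //.
Qed.

Lemma le_sum (F : 'I_n -> nat) i : F i <= \sum_j F j.
Proof. by rewrite (bigD1 i) //= leq_addr. Qed.

Lemma sum_one (F : 'I_n -> nat) i : (forall j, j != i -> F j = 0) -> \sum_j F j = F i.
Proof. by move=> H; rewrite (bigD1 i) //= big1 ?addn0. Qed.

Lemma sum1 (F : 'I_n -> nat) u :
  \sum_a F a = F u + \sum_(a | a != u) F a.
Proof. by rewrite (bigD1 u). Qed.

Lemma sum2 (F : 'I_n -> nat) u v : u != v ->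
  \sum_a F a = F u + F v + \sum_(a | (a != u) && (a != v)) F a.
Proof.
move=> Huv; rewrite (bigD1 u) //= (bigD1 v) /=; last by rewrite eq_sym.
by rewrite addnA.
Qed.

Lemma sum_move1 (F G : 'I_n -> nat) p : F p = G p + 1 ->
  (forall b, b != p -> F b = G b) -> \sum_a F a = \sum_a G a + 1.
Proof.
move=> H1 H2; rewrite (sum1 F p) (sum1 G p) H1.
have E : \sum_(b | b != p) F b = \sum_(b | b != p) G b by apply: eq_bigr.
rewrite E; lia.
Qed.

Lemma sum_move2 (F G : 'I_n -> nat) u v : u != v -> F u = G u + 1 -> G v = F v + 1 ->
  (forall a, a != u -> a != v -> F a = G a) -> \sum_a F a = \sum_a G a.
Proof.
move=> Huv H1 H2 H3; rewrite (sum2 F Huv) (sum2 G Huv).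
have E : \sum_(a | (a != u) && (a != v)) F a = \sum_(a | (a != u) && (a != v)) G a.
  by apply: eq_bigr => a /andP [Ha Hb]; apply: H3.
rewrite E; lia.
Qed.

Lemma rowentE (A : mat) (a : 'I_n) j : rowent A a j = A a j.
Proof. by rewrite /rowent (big_pred1 a). Qed.

Lemma rowent_out (A : mat) k j : n <= k -> rowent A k j = 0.
Proof. move=> H; rewrite /rowent big1 // => x /eqP Hx; have := ltn_ord x; lia. Qed.

Lemma rowsumE (A : mat) (a : 'I_n) : rowsum A a = \sum_j A a j.
Proof. by apply: eq_bigr => j _; rewrite rowentE. Qed.

Lemma rowsum_out (A : mat) k : n <= k -> rowsum A k = 0.
Proof. by move=> H; rewrite /rowsum big1 // => j _; rewrite rowent_out. Qed.


Lemma bigmin1 (r : seq 'I_n) (p : 'I_n) :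
  \big[minn/n]_(j <- r | j == p) (j : nat) = if p \in r then (p:nat) else n.
Proof.
elim: r => [|x r IH]; first by rewrite big_nil.
rewrite big_cons IH in_cons; case: (eqVneq x p) => [->|Hx].
  rewrite /=; case: (p \in r); first by rewrite minnn.
  by have := ltn_ord p; lia.
by [].
Qed.

Lemma e_stepE (A : mat) i (u v p : 'I_n) : v = i :> nat -> u = i.-1 :> nat ->
  cbd A -> 0 < A v p ->
  exists C, e_step i A = Some C /\ forall a b, C a b =
   if b == p then (if a == u then A a b + 1 else if a == v then A a b - 1 else A a b)
   else A a b.
Proof.
move=> Hv Hu HA Hp; subst i; rewrite /e_step -Hu.
have -> : 0 < rowsum A v by rewrite rowsumE (leq_trans Hp (le_sum _ p)).
have -> : \max_(j < n | 0 < rowent A v j) (j:nat) = p.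
  by rewrite (big_pred1 p) // => j /=; rewrite rowentE (cb_row_uniq HA Hp).
by eexists; split; first reflexivity; move=> a b; rewrite mxE.
Qed.

Lemma e_stepN (A : mat) i (v : 'I_n) : v = i :> nat ->
  (forall b, A v b = 0) -> e_step i A = None.
Proof.
move=> Hv H; subst i; rewrite /e_step rowsumE big1 //.
Qed.

Lemma f_stepE (A : mat) i (u v p : 'I_n) : v = i :> nat -> u = i.-1 :> nat ->
  cbd A -> 0 < A u p ->
  exists C, f_step i A = Some C /\ forall a b, C a b =
   if b == p then (if a == u then A a b - 1 else if a == v then A a b + 1 else A a b)
   else A a b.
Proof.
move=> Hv Hu HA Hp; subst i; rewrite /f_step -Hu.
have -> : 0 < rowsum A u by rewrite rowsumE (leq_trans Hp (le_sum _ p)).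
have -> : \big[minn/n]_(j < n | 0 < rowent A u j) (j:nat) = p.
  rewrite (eq_bigl (fun j => j == p)); last first.
    by move=> j /=; rewrite rowentE (cb_row_uniq HA Hp).
  by rewrite bigmin1 mem_index_enum.
by eexists; split; first reflexivity; move=> a b; rewrite mxE.
Qed.

Lemma f_stepN (A : mat) i (u : 'I_n) : u = i.-1 :> nat ->
  (forall b, A u b = 0) -> f_step i A = None.
Proof.
move=> Hu H; rewrite /f_step -Hu rowsumE big1 //.
Qed.


Lemma ord_uv i : 0 < i < n -> exists u v : 'I_n, [/\ (u : nat) = i.-1, (v : nat) = i & u != v].
Proof.
move=> /andP [H0 H1].
have Hu : i.-1 < n by lia.
exists (Ordinal Hu), (Ordinal H1); split => //.
apply/eqP => /(congr1 val) /=; lia.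
Qed.

Lemma ef_inv (B C : mat) i : 0 < i < n -> cbd B -> cbd C ->
  (e_step i B = Some C <-> f_step i C = Some B).
Proof.
move=> Hi HB HC; have [u [v [Hu Hv Huv]]] := ord_uv Hi.
have Hvu : v != u by rewrite eq_sym.
split => H.
- case: (pickP (fun b => 0 < B v b)) => [p /= Hp | H0]; last first.
    by rewrite (e_stepN Hv) in H => // b; apply/eqP; rewrite -leqn0 leqNgt H0.
  have [C' [HC' EC']] := e_stepE Hv Hu HB Hp.
  rewrite HC' in H; case: H => HCC; subst C'.
  have Hq : 0 < C u p by rewrite EC' !eqxx; lia.
  have [B' [HB' EB']] := f_stepE Hv Hu HC Hq.
  rewrite HB'; congr Some; apply/matrixP => a b.
  rewrite EB' EC'; case: (eqVneq b p) => // ->.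
  case: (eqVneq a u) => [->|Ha]; first by rewrite ?eqxx ?(negbTE Huv); lia.
  case: (eqVneq a v) => [->|Hav] //; lia.
- case: (pickP (fun b => 0 < C u b)) => [p /= Hp | H0]; last first.
    by rewrite (f_stepN Hu) in H => // b; apply/eqP; rewrite -leqn0 leqNgt H0.
  have [B' [HB' EB']] := f_stepE Hv Hu HC Hp.
  rewrite HB' in H; case: H => HBB; subst B'.
  have Hq : 0 < B v p by rewrite EB' !eqxx (negbTE Hvu); lia.
  have [C' [HC' EC']] := e_stepE Hv Hu HB Hq.
  rewrite HC'; congr Some; apply/matrixP => a b.
  rewrite EC' EB'; case: (eqVneq b p) => // ->.
  case: (eqVneq a u) => [->|Ha]; first by rewrite ?eqxx ?(negbTE Huv); lia.
  case: (eqVneq a v) => [->|Hav] //; lia.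
Qed.


Lemma cbP (lam : ncomp n) (A : mat) : in_cb lam A -> cbd A.
Proof. by case/andP => /cbdP. Qed.

Lemma act_e_inv (lam : ncomp n) k (A C : mat) : act_e lam k (Some A) = Some C ->
  e_step k A = Some C /\ in_cb lam C.
Proof.
rewrite /act_e /S_act; case: (e_step k A) => [C'|] //.
by case: ifP => // H [<-].
Qed.

Lemma act_f_inv (lam : ncomp n) k (A C : mat) : act_f lam k (Some A) = Some C ->
  f_step k A = Some C /\ in_cb lam C.
Proof.
rewrite /act_f /S_act; case: (f_step k A) => [C'|] //.
by case: ifP => // H [<-].
Qed.

Lemma act_ef (lam : ncomp n) i (B C : mat) : 0 < i < n -> in_cb lam B -> in_cb lam C ->
  (act_e lam i (Some B) = Some C <-> act_f lam i (Some C) = Some B).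
Proof.
move=> Hi HB HC; split.
- move/act_e_inv => [H _]; move: H; rewrite (ef_inv Hi (cbP HB) (cbP HC)) => H.
  by rewrite /act_f /S_act H HB.
- move/act_f_inv => [H _]; move: H; rewrite -(ef_inv Hi (cbP HB) (cbP HC)) => H.
  by rewrite /act_e /S_act H HC.
Qed.

Lemma act_es_None (lam : ncomp n) s : act_es lam s None = None.
Proof. by elim: s => //= i s ->. Qed.

Lemma act_fs_None (lam : ncomp n) s : act_fs_rev lam s None = None.
Proof. by elim: s. Qed.

Lemma act_es_valid (lam : ncomp n) s (A B : mat) : in_cb lam A -> act_es lam s (Some A) = Some B ->
  in_cb lam B.
Proof.
elim: s B => [|i s IH] B /= HA; first by case=> <-.
case E: (act_es lam s (Some A)) => [B'|]; last by rewrite /act_e /=.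
by move/act_e_inv => [].
Qed.

Lemma act_fs_cons (lam : ncomp n) i s x :
  act_fs_rev lam (i :: s) x = act_fs_rev lam s (act_f lam i x).
Proof. by []. Qed.

Lemma act_fs_valid (lam : ncomp n) s (A B : mat) : in_cb lam A -> act_fs_rev lam s (Some A) = Some B ->
  in_cb lam B.
Proof.
elim: s A => [|i s IH] A HA; first by case=> <-.
rewrite act_fs_cons; case E: (act_f lam i (Some A)) => [B'|]; last by rewrite act_fs_None.
apply: IH; by have [] := act_f_inv E.
Qed.

Lemma act_es_cons (lam : ncomp n) i s x :
  act_es lam (i :: s) x = act_e lam i (act_es lam s x).
Proof. by []. Qed.

Lemma es_fs (lam : ncomp n) s (A C : mat) : good_indices n s -> in_cb lam A -> in_cb lam C ->
  (act_es lam s (Some A) = Some C <-> Some A = act_fs_rev lam s (Some C)).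
Proof.
elim: s C => [|i s IH] C; first by [].
rewrite act_fs_cons act_es_cons => /andP [Hi Hs] HA HC; split.
- case E: (act_es lam s (Some A)) => [B|]; last by [].
  have HB := act_es_valid HA E.
  move/(act_ef Hi HB HC) => ->.
  by apply/(IH B Hs HA HB).
- case E: (act_f lam i (Some C)) => [B|]; last by rewrite act_fs_None.
  have [_ HB] := act_f_inv E.
  move/(IH B Hs HA HB) => ->.
  by apply/(act_ef Hi HB HC).
Qed.


Lemma f_rowsum (B C : mat) i : 0 < i < n -> cbd C -> f_step i C = Some B ->
  forall k, rowsum B k + (k == i.-1) = rowsum C k + (k == i).
Proof.
move=> Hi HC H; have [u [v [Hu Hv Huv]]] := ord_uv Hi.
case: (pickP (fun b => 0 < C u b)) => [p /= Hp | H0]; last first.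
  by rewrite (f_stepN Hu) in H => // b; apply/eqP; rewrite -leqn0 leqNgt H0.
have [B' [HB' EB']] := f_stepE Hv Hu HC Hp.
rewrite HB' in H; case: H => HBB; subst B'.
move=> k; case: (ltnP k n) => Hk; last first.
  rewrite !rowsum_out //; move/andP: Hi => [H1 H2].
  have -> : (k == i.-1) = false by apply/eqP; lia.
  by have -> : (k == i) = false by apply/eqP; lia.
have -> : k = Ordinal Hk by [].
set kk := Ordinal Hk; rewrite !rowsumE.
case: (eqVneq kk u) => [->|Hku].
  rewrite Hu eqxx; have -> : (i.-1 == i) = false by apply/eqP; move/andP: Hi => [? ?]; lia.
  have := @sum_move1 (C u) (B u) p; rewrite EB' !eqxx => ->; first by rewrite addn0.
    lia.
  by move=> b Hb; rewrite EB' (negbTE Hb).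
case: (eqVneq kk v) => [->|Hkv].
  rewrite Hv eqxx; have -> : (i == i.-1) = false by apply/eqP; move/andP: Hi => [? ?]; lia.
  have := @sum_move1 (B v) (C v) p; rewrite EB' !eqxx eq_sym (negbTE Huv) => ->.
  - by rewrite addn0.
  - by [].
  - by move=> b Hb; rewrite EB' (negbTE Hb).
have -> : ((kk : nat) == i.-1) = false by rewrite -Hu; exact: (negbTE Hku).
have -> : ((kk : nat) == i) = false by rewrite -Hv; exact: (negbTE Hkv).
rewrite !addn0; apply: eq_bigr => b _; rewrite EB' (negbTE Hku) (negbTE Hkv).
by case: (b == p).
Qed.

Lemma sum_ind k m : \sum_(0 <= a < k) (a == m) = (m < k).
Proof.
elim: k => [|k IH]; first by rewrite big_geq.
rewrite big_nat_recr //= IH; case: (ltngtP m k) => [H|H|->].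
- by rewrite ltnS (ltnW H).
- by rewrite ltnS leqNgt H.
- by rewrite ltnSn.
Qed.


Lemma fs_inv (lam : ncomp n) s (D A : mat) : good_indices n s -> in_cb lam D ->
  act_fs_rev lam s (Some D) = Some A ->
  forall k, \sum_(0 <= a < k) rowsum A a + count_mem k s = \sum_(0 <= a < k) rowsum D a.
Proof.
elim/last_ind: s A => [|s i IH] A.
  by move=> _ HD [<-] k; rewrite addn0.
rewrite /good_indices all_rcons => /andP [Hi Hs] HD.
rewrite /act_fs_rev foldl_rcons -/(act_fs_rev lam s (Some D)).
case E: (act_fs_rev lam s (Some D)) => [B|]; last by [].
move/act_f_inv => [Hf _] k.
have HB := act_fs_valid HD E.
have Hrel := f_rowsum Hi (cbP HB) Hf.
have Hsum : \sum_(0 <= a < k) rowsum A a + (i.-1 < k) = \sum_(0 <= a < k) rowsum B a + (i < k).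
  by rewrite -!sum_ind -!big_split; apply: eq_bigr => a _; apply: Hrel.
have := IH B Hs HD E k; rewrite -cats1 count_cat /=.
move/andP: Hi => [Hi1 Hi2].
case: (ltngtP i k) => Hik.
- have E1 : (i.-1 < k) = true by apply/idP; lia.
  rewrite E1 in Hsum; lia.
- have E1 : (i.-1 < k) = false by apply/idP; lia.
  rewrite E1 in Hsum; lia.
- have E1 : (i.-1 < k) = true by apply/idP; lia.
  rewrite E1 in Hsum; lia.
Qed.

Lemma Dmat_cb (lam : ncomp n) : in_cb lam (Dmat lam).
Proof.
apply/andP; split.
  apply/cbdP => a b; rewrite mxE; case: eqVneq => // <- _ a' s Ha Hs.
  rewrite mxE; case: eqVneq => // E; subst; lia.
apply/eqP/ffunP => j; rewrite !ffunE (sum_one (i := j)) ?mxE ?eqxx // => a Ha.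
by rewrite mxE (negbTE Ha).
Qed.

Lemma part3 (lam : ncomp n) s t (A : mat) : good_indices n s -> good_indices n t ->
  Some A = act_fs_rev lam s (Some (Dmat lam)) ->
  Some A = act_fs_rev lam t (Some (Dmat lam)) ->
  perm_eq s t /\ size s = size t.
Proof.
move=> Hs Ht Es Et.
have Hp : perm_eq s t.
  rewrite /perm_eq; apply/allP => k _; apply/eqP.
  have := fs_inv Hs (Dmat_cb lam) (esym Es) k.
  have := fs_inv Ht (Dmat_cb lam) (esym Et) k.
  lia.
by split => //; apply: perm_size.
Qed.


Lemma step_exists (lam : ncomp n) r (A : mat) : in_Lambda_bullet r lam -> in_cb lam A ->
  A != Dmat lam -> exists k, (0 < k < n) /\ exists C, act_e lam k (Some A) = Some C.
Proof.
move=> [_ Hbul] HAcb HneD.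
have HA := cbP HAcb; have /andP [_ /eqP Hco] := HAcb.
have Hlam : forall j, lam j = \sum_i A i j by move=> j; rewrite -Hco ffunE.
pose P m := [exists j : 'I_n, ((j : nat) == m) && [exists i : 'I_n, (i != j) && (0 < A i j)]].
have Hex : exists m, P m.
  case: (boolP [exists j : 'I_n, [exists i : 'I_n, (i != j) && (0 < A i j)]]) => [/existsP [j Hj]|Hno].
    by exists (j : nat); apply/existsP; exists j; rewrite eqxx.
  case/eqP: HneD; apply/matrixP => a b; rewrite mxE.
  have Z : forall j i : 'I_n, i != j -> A i j = 0.
    move=> j i Hij; move: Hno; rewrite negb_exists => /forallP /(_ j).
    rewrite negb_exists => /forallP /(_ i).
    by rewrite Hij /= -leqNgt leqn0 => /eqP.
  case: eqVneq => [<-|Hab]; last by rewrite Z.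
  by rewrite Hlam (sum_one (i:=a)) // => i Hi; apply: Z.
case: (ex_minnP Hex) => m /existsP [j /andP [/eqP Hjm /existsP [i /andP [Hij Hpos]]]] Hmin.
subst m.
have Hdiag : forall j' : 'I_n, j' < j -> forall i', i' != j' -> A i' j' = 0.
  move=> j' Hj' i' Hi'; apply/eqP; rewrite -leqn0 leqNgt; apply/negP => Hp.
  have : P j' by apply/existsP; exists j'; rewrite eqxx /=; apply/existsP; exists i'; rewrite Hi' Hp.
  move/Hmin; lia.
have Hlj : 0 < lam j by rewrite Hlam (leq_trans Hpos (le_sum (fun a => A a j) i)).
have Hdpos : forall j' : 'I_n, j' < j -> 0 < A j' j'.
  move=> j' Hj'; have -> : A j' j' = lam j'.
    by rewrite Hlam (sum_one (i:=j')) // => a Ha; apply: Hdiag.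
  case E: (lam j') => //=; move: (Hbul j' j (ltnW Hj') E); lia.
have Hup : forall i' : 'I_n, i' < j -> A i' j = 0.
  by move=> i' Hi'; exact: (HA i' i' (Hdpos i' Hi') i' j (leqnn _) Hi').
have Hij' : j < i.
  case: (ltngtP i j) => H //; first by rewrite Hup in Hpos.
  by move/eqP: Hij; case; apply: val_inj.
have Hi0 : 0 < i < n by rewrite (leq_ltn_trans (leq0n j) Hij') ltn_ord.
have [u [v [Hu Hv Huv]]] := ord_uv Hi0.
have Ev : v = i by apply: val_inj.
subst v.
have Hui : (u : nat) <= i by rewrite Hu leq_pred.
have F5 : forall c, c != j -> A u c = 0.
  move=> c Hc; case: (ltngtP c j) => Hcj.
  - apply: Hdiag => //; apply/eqP => E; move: Hcj; rewrite -E; lia.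
  - exact: (HA i j Hpos u c Hui Hcj).
  - by move/eqP: Hc; case; apply: val_inj.
have [C [HCe EC]] := e_stepE Hv Hu HA Hpos.
exists i; split => //; exists C.
rewrite /act_e /S_act HCe.
suff -> : in_cb lam C by [].
apply/andP; split.
- apply/cbdP => a b Hab a' s Ha' Hs.
  case: (eqVneq b j) => [Eb|Hb].
  + subst b.
    have Hs' : s != j by apply/eqP => E; subst; lia.
    rewrite EC (negbTE Hs').
    case: (eqVneq a u) => [Ea|Hau].
      by subst a; apply: (HA i j Hpos a' s _ Hs); lia.
    case: (eqVneq a i) => [Ea|Hav].
      by subst a; apply: (HA i j Hpos a' s _ Hs).
    apply: (HA a j _ a' s Ha' Hs).
    by rewrite EC eqxx (negbTE Hau) (negbTE Hav) in Hab.
  + have Hab' : 0 < A a b by rewrite EC (negbTE Hb) in Hab.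
    case: (eqVneq s j) => [Es|Hs']; last first.
      by rewrite EC (negbTE Hs'); apply: (HA a b Hab' a' s Ha' Hs).
    subst s; rewrite EC eqxx.
    case: (eqVneq a' u) => [Ea'|Hau].
      subst a'; exfalso.
      case: (eqVneq a u) => [Eau|Hau'].
        by subst a; rewrite F5 in Hab'.
      have Hau2 : (a : nat) <> u by move=> E; move/eqP: Hau'; apply; apply: val_inj.
      have : A i j = 0 by apply: (HA a b Hab' i j _ Hs); lia.
      lia.
    case: (eqVneq a' i) => [Ea'|Hav].
      by subst a'; rewrite (HA a b Hab' i j Ha' Hs).
    by rewrite ?(negbTE Hau) ?(negbTE Hav); exact: (HA a b Hab' a' j Ha' Hs).
- apply/eqP/ffunP => b; rewrite ffunE Hlam.
  case: (eqVneq b j) => [->|Hb]; last first.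
    by apply: eq_bigr => a _; rewrite EC (negbTE Hb).
  apply: (@sum_move2 (fun a => C a j) (fun a => A a j) u i Huv).
  + by rewrite /= EC !eqxx.
  + by rewrite /= EC !eqxx eq_sym (negbTE Huv); lia.
  + by move=> a Ha Hb /=; rewrite EC eqxx (negbTE Ha) (negbTE Hb).
Qed.


Definition Phi (A : mat) := \sum_(0 <= a < n) a * rowsum A a.

Lemma sum_ind_mul k m : \sum_(0 <= a < k) a * (a == m) = (m < k) * m.
Proof.
elim: k => [|k IH]; first by rewrite big_geq.
rewrite big_nat_recr //= IH; case: (ltngtP m k) => [H|H|->].
- by rewrite ltnS (ltnW H) muln0 addn0.
- by rewrite ltnS leqNgt H muln0.
- by rewrite ltnSn /= ?muln1 ?mul0n ?mul1n ?add0n ?ltnn.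
Qed.

Lemma phi_dec (A C : mat) i : 0 < i < n -> cbd C -> f_step i C = Some A -> Phi C < Phi A.
Proof.
move=> Hi HC Hf; have Hrel := f_rowsum Hi HC Hf.
have H1 : Phi A + \sum_(0 <= a < n) a * (a == i.-1) = Phi C + \sum_(0 <= a < n) a * (a == i).
  by rewrite /Phi -!big_split; apply: eq_bigr => a _ /=; rewrite -!mulnDr Hrel.
rewrite !sum_ind_mul in H1; move/andP: Hi => [Hi1 Hi2].
have E1 : (i.-1 < n) = true by apply/idP; lia.
rewrite E1 Hi2 in H1; lia.
Qed.

Lemma reach (lam : ncomp n) r : in_Lambda_bullet r lam -> forall N (A : mat),
  Phi A < N -> in_cb lam A ->
  exists s, good_indices n s /\ act_es lam s (Some A) = Some (Dmat lam).
Proof.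
move=> Hbul; elim=> // N IH A HN HA.
case: (eqVneq A (Dmat lam)) => [->|Hne]; first by exists [::].
have [k [Hk [C HC]]] := step_exists Hbul HA Hne.
have [He HCcb] := act_e_inv HC.
have Hf : f_step k C = Some A by rewrite -(ef_inv Hk (cbP HA) (cbP HCcb)).
have Hlt := phi_dec Hk (cbP HCcb) Hf.
have [s [Hs Es]] := IH C (leq_trans Hlt HN) HCcb.
exists (rcons s k); split.
  by rewrite /good_indices all_rcons Hk.
by rewrite /act_es foldr_rcons HC.
Qed.

End Proofs.

Theorem mainTheorem3 (n r : nat) (lam : ncomp n) (A : 'M[nat]_n) :
  in_Lambda_bullet r lam ->
  in_cb lam A ->
  (exists s : seq nat,
      good_indices n s /\ act_es lam s (ebar A) = kbar lam) /\
  (forall s : seq nat, good_indices n s ->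
      (act_es lam s (ebar A) = kbar lam <-> ebar A = act_fs_rev lam s (kbar lam))) /\
  (forall s t : seq nat, good_indices n s -> good_indices n t ->
      ebar A = act_fs_rev lam s (kbar lam) ->
      ebar A = act_fs_rev lam t (kbar lam) ->
      perm_eq s t /\ size s = size t).
Proof.
move=> Hb HA; split; [|split].
- exact: (@reach n lam r Hb (Phi A).+1 A (ltnSn _) HA).
- move=> s Hs; exact: (es_fs Hs HA (Dmat_cb lam)).
- move=> s t Hs Ht Es Et; exact: (part3 Hs Ht Es Et).
Qed.
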